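(* Let $G$ be a multigraph (loops and parallel edges allowed) and $e$ any edge of $G$. Then $$P(\mathcal{H}_G,\lambda)=\lambda P(\mathcal{H}_{G-e},\lambda)-P(\mathcal{H}_{G/e},\lambda),$$ where $G-e$ is obtained by deleting $e$ and $G/e$ by contracting $e$ (for a loop $e$, $G/e=G-e$).
   Context: A hypergraph $\mathcal{H}=(\mathcal{V},\mathcal{E})$ consists of a finite vertex set $\mathcal{V}$ and a set $\mathcal{E}$ of subsets of $\mathcal{V}$, each of size at least $1$, called edges. For a positive integer $\lambda$, a weak proper $\lambda$-colouring of $\mathcal{H}$ is a map $\phi:\mathcal{V}\to\{1,\dots,\lambda\}$ such that $|\{\phi(v):v\in e\}|>1$ for every $e\in\mathcal{E}$. $P(\mathcal{H},\lambda)$ denotes the number of weak proper $\lambda$-colourings; it is a polynomial in $\lambda$. For a multigraph $G=(V,E)$, $\mathcal{H}_G$ is the hypergraph with vertex set $V\cup\{w_e:e\in E\}$ (distinct new vertices $w_e$) and edge set $\{\{u_e,v_e,w_e\}:e\in E\}$, where $u_e,v_e$ are the ends of $e$. *)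

(* Defs.v *)
From HB Require Import structures.
From mathcomp Require Import all_boot all_order all_algebra.
Set Implicit Arguments. Unset Strict Implicit. Unset Printing Implicit Defensive.

Record hypergraph := Hypergraph {
  hvert : finType;
  hedges : {set {set hvert}} }.

(* Number of weak proper lambda-colourings; colours {1..lambda} are
   represented by 'I_lambda. *)
Definition chromP (H : hypergraph) (lambda : nat) : nat :=
  #|[set f : {ffun hvert H -> 'I_lambda} |
       [forall A in hedges H, 1 < #|[set f x | x in A]|]]|.

(* A finite multigraph: vertex type, edge type, and the ends of each edge
   (loops: both ends equal; parallel edges: distinct edges, same ends). *)
Record multigraph := Multigraph {
  vert : finType;
  edge : finType;
  ends : edge -> vert * vert }.

(* H_G: vertices V + E (w_e = inr e), edges {u_e, v_e, w_e}. *)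
Definition hyp_of (G : multigraph) : hypergraph :=
  @Hypergraph (vert G + edge G)%type
    [set [set inl (ends x).1; inl (ends x).2; inr x] | x : edge G].

Definition delete_edge (G : multigraph) (e : edge G) : multigraph :=
  @Multigraph (vert G) {x : edge G | x != e} (fun x => ends (val x)).

(* G / e for a non-loop e with ends u, v: v is merged into u. *)
Definition contract_map (G : multigraph) (e : edge G)
  (H : (ends e).1 != (ends e).2) (x : vert G) : {y : vert G | y != (ends e).2} :=
  match boolP (x != (ends e).2) with
  | AltTrue Hx => exist _ x Hx
  | AltFalse _ => exist _ (ends e).1 H
  end.

Definition contract_nonloop (G : multigraph) (e : edge G)
  (H : (ends e).1 != (ends e).2) : multigraph :=
  @Multigraph {y : vert G | y != (ends e).2} {x : edge G | x != e}
    (fun x => (contract_map H (ends (val x)).1, contract_map H (ends (val x)).2)).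

Definition contract_edge (G : multigraph) (e : edge G) : multigraph :=
  match boolP ((ends e).1 != (ends e).2) with
  | AltTrue H => contract_nonloop H
  | AltFalse _ => delete_edge e
  end.

(* Main.v *)
Require Import Defs.
From HB Require Import structures.
From mathcomp Require Import all_boot all_order all_algebra.
Set Implicit Arguments. Unset Strict Implicit.

Lemma card3 (T : finType) (a b c : T) : (1 < #|[set a; b; c]|) = (a != b) || (a != c).
Proof.
case: (eqVneq a b) => [<-|ab] /=.
  case: (eqVneq a c) => [<-|ac]; first by rewrite !setUid cards1.
  Set Printing All. idtac. Unset Printing All. have -> : [set a; a; c] = [set a; c] by apply/setP=> z; rewrite !inE; case: (z == a).
  by rewrite cards2 ac.
apply/card_gt1P; exists a, b; rewrite !inE ab eqxx /=; split => //; by rewrite eqxx orbT.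
Qed.

Lemma imset3 (T U : finType) (f : T -> U) a b c : [set f x | x in [set a; b; c]] = [set f a; f b; f c].
Proof. by rewrite !imsetU !imset_set1. Qed.

Definition okc (V E I : finType) (en : E -> V * V) (f : V + E -> I) (x : E) :=
  (f (inl (en x).1) != f (inl (en x).2)) || (f (inl (en x).1) != f (inr x)).

Lemma chromPE (G : multigraph) l : chromP (hyp_of G) l =
  #|[set f : {ffun (vert G + edge G)%type -> 'I_l} | [forall x, okc (@ends G) f x]]|.
Proof.
apply: eq_card => f; rewrite !inE.
apply/forallP/forallP => /= H.
  move=> x; have := H [set inl (ends x).1; inl (ends x).2; inr x].
  by rewrite (imset_f (fun x0 : edge G => [set inl (ends x0).1; inl (ends x0).2; inr x0])) //= imset3 card3.
move=> A; apply/implyP => /imsetP [x _ ->]; rewrite imset3 card3; exact: H x.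
Qed.

Lemma card_bij (T1 T2 : finType) (A : {set T1}) (B : {set T2}) (f : T1 -> T2) (g : T2 -> T1) :
  {in A, forall x, f x \in B} -> {in B, forall y, g y \in A} ->
  {in A, cancel f g} -> {in B, cancel g f} -> #|A| = #|B|.
Proof.
move=> fAB gBA fK gK; apply/eqP; rewrite eqn_leq; apply/andP; split.
  rewrite -(card_in_imset (can_in_inj fK)); apply: subset_leq_card.
  by apply/subsetP => y /imsetP [x xA ->]; exact: fAB.
rewrite -(card_in_imset (can_in_inj gK)); apply: subset_leq_card.
by apply/subsetP => y /imsetP [x xA ->]; exact: gBA.
Qed.

Definition Sset (G : multigraph) l :=
  [set f : {ffun (vert G + edge G)%type -> 'I_l} | [forall x, okc (@ends G) f x]].
Definition Tset (G : multigraph) (e : edge G) l :=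
  [set f : {ffun (vert G + edge G)%type -> 'I_l} | [forall x, (x != e) ==> okc (@ends G) f x]].
Definition Mset (G : multigraph) (e : edge G) l :=
  [set f in Tset e l | ~~ okc (@ends G) f e].

Lemma T_split (G : multigraph) (e : edge G) l :
  #|Tset e l| = (#|Sset G l| + #|Mset e l|)%N.
Proof.
have E1 : Tset e l :&: Sset G l = Sset G l.
  apply/setP => f; rewrite !inE; apply/andP/idP => [[] //|H]; split=> //.
  by apply/forallP => x; apply/implyP => _; move/forallP: H; apply.
have E2 : Tset e l :\: Sset G l = Mset e l.
  apply/setP => f; rewrite !inE; apply/andP/andP => [[nS T]|[T nok]]; split => //.
    apply: contra nS => H; apply/forallP => x; case: (eqVneq x e) => [->//|xe].
    by move/forallP: T => /(_ x); rewrite xe.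
  by apply: contra nok => /forallP; apply.
by rewrite -(cardsID (Sset G l) (Tset e l)) E1 E2.
Qed.

Definition restrD (G : multigraph) (e : edge G) l (f : {ffun (vert G + edge G)%type -> 'I_l}) :
  {ffun (vert (delete_edge e) + edge (delete_edge e))%type -> 'I_l} :=
  [ffun y => match y with inl v => f (inl v) | inr x => f (inr (val x)) end].

Definition extD (G : multigraph) (e : edge G) l
  (g : {ffun (vert (delete_edge e) + edge (delete_edge e))%type -> 'I_l}) (c : 'I_l) :
  {ffun (vert G + edge G)%type -> 'I_l} :=
  [ffun z => match z with inl v => g (inl v)
     | inr x => match @insub _ (fun x => x != e) {x : edge G | x != e} x with
                | Some x' => g (inr x') | None => c end end].

Lemma T_count (G : multigraph) (e : edge G) l :
  #|Tset e l| = (l * chromP (hyp_of (delete_edge e)) l)%N.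
Proof.
rewrite chromPE -[l in (l * _)%N]card_ord -cardsT mulnC -cardsX.
apply: (card_bij (f := fun f => (restrD e f, f (inr e))) (g := fun p => extD p.1 p.2)).
- move=> f; rewrite !inE => /forallP H; rewrite andbT; apply/forallP => x.
  have := H (val x); rewrite (valP x) /= /okc /restrD /= !ffunE; done.
- move=> [g c]; rewrite !inE andbT => /forallP /= H; apply/forallP => x; apply/implyP => xe.
  have := H (Sub x xe); rewrite /okc /extD /= !ffunE insubT /=; done.
- move=> f _; apply/ffunP => -[v|x]; rewrite /extD /restrD !ffunE //=.
  by case: insubP => [x' _ <-|]; rewrite ?ffunE //= negbK => /eqP ->.
- move=> [g c] _; rewrite /extD /restrD /=; congr (_, _); last by rewrite ffunE insubF ?eqxx.
  apply/ffunP => -[v|x]; rewrite !ffunE //= insubT ?(valP x) //= => H.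
  by congr (g (inr _)); apply: val_inj.
Qed.

Lemma contract_mapE (G : multigraph) (e : edge G) (H : (ends e).1 != (ends e).2) x :
  val (contract_map H x) = if x == (ends e).2 then (ends e).1 else x.
Proof. rewrite /contract_map; destruct boolP as [h|h]; rewrite /=. by rewrite (negbTE h). by rewrite (negbNE h). Qed.

Definition restrC (G : multigraph) (e : edge G) (H : (ends e).1 != (ends e).2) l
  (f : {ffun (vert G + edge G)%type -> 'I_l}) :
  {ffun (vert (contract_nonloop H) + edge (contract_nonloop H))%type -> 'I_l} :=
  [ffun y => match y with inl v => f (inl (val v)) | inr x => f (inr (val x)) end].

Definition extC (G : multigraph) (e : edge G) (H : (ends e).1 != (ends e).2) l
  (g : {ffun (vert (contract_nonloop H) + edge (contract_nonloop H))%type -> 'I_l}) :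
  {ffun (vert G + edge G)%type -> 'I_l} :=
  [ffun z => match z with inl v => g (inl (contract_map H v))
     | inr x => match @insub _ (fun x => x != e) {x : edge G | x != e} x with
                | Some x' => g (inr x') | None => g (inl (contract_map H (ends e).1)) end end].

Lemma M_count (G : multigraph) (e : edge G) l :
  #|Mset e l| = chromP (hyp_of (contract_edge e)) l.
Proof.
rewrite /contract_edge; destruct boolP as [H|H]; rewrite chromPE.
  set u := (ends e).1 in H *; set v := (ends e).2 in H *.
  have mu : val (contract_map H u) = u by rewrite contract_mapE (negbTE H).
  have mv : val (contract_map H v) = u by rewrite contract_mapE eqxx.
  have mK : forall y, contract_map H (val y) = y.
    by move=> y; apply: val_inj; rewrite contract_mapE (negbTE (valP y)).
  apply: (card_bij (f := fun f => restrC H f) (g := fun g => extC g)).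
  - move=> f; rewrite !inE => /andP [/forallP T]; rewrite /okc negb_or !negbK => /andP [/eqP E1 /eqP E2].
    have fm : forall a, f (inl (val (contract_map H a))) = f (inl a).
      by move=> a; rewrite contract_mapE; case: eqP => // ->.
    apply/forallP => x.
    have := T (val x); rewrite (valP x) /= /okc /restrC /= !ffunE /= !fm; done.
  - move=> g; rewrite !inE => /forallP /= Hg; apply/andP; split.
      apply/forallP => x; apply/implyP => xe.
      have := Hg (Sub x xe); rewrite /okc /extC /= !ffunE insubT /=; done.
    rewrite /okc /extC !ffunE insubF ?eqxx //=.
    have -> : contract_map H v = contract_map H u by apply: val_inj; rewrite mu mv.
    by rewrite eqxx.
  - move=> f; rewrite !inE => /andP [_]; rewrite /okc negb_or !negbK => /andP [/eqP E1 /eqP E2].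
    have fm : forall a, f (inl (val (contract_map H a))) = f (inl a).
      by move=> a; rewrite contract_mapE; case: eqP => // ->.
    apply/ffunP => -[a|x]; rewrite /extC /restrC !ffunE /= ?fm //.
    case: insubP => [x' _ <-|]; rewrite ?ffunE //= ?fm negbK => /eqP ->.
    by rewrite E2.
  - move=> g _; rewrite /extC /restrC /=.
    apply/ffunP => -[a|x]; rewrite !ffunE /= ?mK // insubT ?(valP x) //= => H'.
    by congr (g (inr _)); apply: val_inj.
apply: (card_bij (f := fun f => restrD e f) (g := fun g => extD g (g (inl (ends e).1)))).
- move=> f; rewrite !inE => /andP [/forallP T nok]; apply/forallP => x.
  have := T (val x); rewrite (valP x) /= /okc /restrD /= !ffunE; done.
- move=> g; rewrite !inE => /forallP /= Hg; apply/andP; split.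
    apply/forallP => x; apply/implyP => xe.
    have := Hg (Sub x xe); rewrite /okc /extD /= !ffunE insubT /=; done.
  rewrite /okc /extD !ffunE insubF ?eqxx //= (eqP (negbNE H)) eqxx //.
- move=> f; rewrite !inE => /andP [_]; rewrite /okc negb_or !negbK => /andP [/eqP E1 /eqP E2].
  apply/ffunP => -[v|x]; rewrite /extD /restrD !ffunE //=.
  case: insubP => [x' _ <-|]; rewrite ?ffunE //= negbK => /eqP ->.
  by rewrite E2.
- move=> g _; rewrite /extD /restrD /=.
  apply/ffunP => -[v|x]; rewrite !ffunE //= insubT ?(valP x) //= => H'.
  by congr (g (inr _)); apply: val_inj.
Qed.

Import GRing.Theory.
Local Open Scope ring_scope.

Theorem proposition5 (G : multigraph) (e : edge G) (lambda : nat) :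
  (0 < lambda)%N ->
  (chromP (hyp_of G) lambda)%:Z =
    lambda%:Z * (chromP (hyp_of (delete_edge e)) lambda)%:Z
    - (chromP (hyp_of (contract_edge e)) lambda)%:Z.
Proof.
move=> _.
have E : (lambda * chromP (hyp_of (delete_edge e)) lambda =
          chromP (hyp_of G) lambda + chromP (hyp_of (contract_edge e)) lambda)%N.
  by rewrite -T_count -M_count T_split chromPE.
by rewrite -PoszM E PoszD addrK.
Qed.
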